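(* There exist a compact Hausdorff abelian group $G$ and Čech-analytic sets $A,B\subset G$ such that $A+B$ is not Čech-analytic.
   Context: Let $X$ be a compact Hausdorff space. A set $A\subset X$ is Čech-analytic if $A$ is the projection onto $X$ of a subset of $X\times\mathbb{N}^{\mathbb{N}}$ that is the intersection of a closed set with a $G_\delta$ set (here $\mathbb{N}^{\mathbb{N}}$ carries the product topology). *)

(* Defs.v *)
From HB Require Import structures.
From mathcomp Require Import all_boot all_algebra.
From mathcomp Require Import all_classical all_reals all_analysis.
From mathcomp Require Import borel_hierarchy.
Import GRing.Theory.
Local Open Scope classical_set_scope.
Local Open Scope ring_scope.

(* Baire space N^N: {ptws nat -> nat} = product topology of discrete nat. *)

Definition cech_analytic {X : topologicalType} (A : set X) : Prop :=
  exists (C S : set (X * {ptws nat -> nat})),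
    closed C /\ Gdelta S /\ A = fst @` (C `&` S).

Definition sumset {G : zmodType} (A B : set G) : set G :=
  [set a + b | a in A & b in B].

(* Main.v *)
Require Import Defs.
From HB Require Import structures.
From mathcomp Require Import all_boot all_algebra.
From mathcomp Require Import all_classical all_reals all_analysis.
From mathcomp Require Import borel_hierarchy.
Import GRing.Theory.
Local Open Scope classical_set_scope.
Local Open Scope ring_scope.

Lemma near_coord {I : eqType} {V : discreteTopologicalType}
  (f : {ptws I -> V}) (i : I) : \forall g \near f, g i = f i.
Proof.
have := @proj_continuous I (fun _ => V) i f [set f i] (discrete_set1 _).
move=> h; exact: h.
Qed.

Definition Y := {ptws nat -> bool}.
Definition K := (Y * nat)%type.
Definition G := {ptws K -> bool}.
HB.instance Definition _ := Topological.copy G {ptws K -> bool}.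
HB.instance Definition _ := GRing.Zmodule.copy G (K -> bool).

Lemma G_sub_continuous : continuous (fun x : G * G => x.1 - x.2).
Proof.
move=> x.
apply: (proj2 (@pointwise_cvgP K bool ((fun x : G * G => x.1 - x.2) @ nbhs x) (x.1 - x.2) _)) => t.
apply: cvg_near_cst.
have h1 := near_coord x.1 t.
have h2 := near_coord x.2 t.
have c1 : (fun z : G * G => z.1) @ nbhs x --> x.1 by apply: cvg_fst.
have c2 : (fun z : G * G => z.2) @ nbhs x --> x.2 by apply: cvg_snd.
have e1 : \forall z \near x, z.1 t = x.1 t := c1 _ h1.
have e2 : \forall z \near x, z.2 t = x.2 t := c2 _ h2.
suff : \forall z \near x, (z.1 - z.2) t = (x.1 - x.2) t by [].
near=> z.
have -> : (z.1 - z.2) t = z.1 t - z.2 t by [].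
by rewrite (near e1 z) ?(near e2 z).
Unshelve. all: by end_near.
Qed.

HB.instance Definition _ :=
  PreTopologicalNmodule_isTopologicalZmodule.Build G G_sub_continuous.
Definition NN := {ptws nat -> nat}.
Definition Zt := (Y * NN)%type.

Definition cylz (m : nat) (z : Zt) : set Zt :=
  [set z' | forall i, (i < m)%N -> z'.1 i = z.1 i /\ z'.2 i = z.2 i].

Lemma cyl_open (U : set Zt) z : open U -> U z -> exists m, cylz m z `<=` U.
Proof.
move=> oU Uz; apply/not_existsP => H.
have /choice[w hw] : forall m, exists z', cylz m z z' /\ ~ U z'.
  move=> m; have := H m; move/existsNP => [z' /not_implyP [? ?]].
  by exists z'.
have cw : w @ \oo --> z.
  have -> : w = (fun n => ((w n).1, (w n).2)) by apply: funext => n; case: (w n).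
  move: hw; case: z {Uz H} => z1 z2 hw /=.
  apply: (@cvg_pair _ _ _ _ (nbhs z1) (nbhs z2) _ _ _ (fun n => (w n).1) (fun n => (w n).2)).
  - apply: (proj2 (@pointwise_cvgP nat bool _ z1 _)) => t.
    apply: cvg_near_cst.
    suff : \forall n \near \oo, (w n).1 t = z1 t by [].
    near=> n; have [+ _] := hw n; move/(_ t) => []//.
    by near: n; exact: nbhs_infty_gt.
  - apply: (proj2 (@pointwise_cvgP nat nat _ z2 _)) => t.
    apply: cvg_near_cst.
    suff : \forall n \near \oo, (w n).2 t = z2 t by [].
    near=> n; have [+ _] := hw n; move/(_ t) => []//.
    by near: n; exact: nbhs_infty_gt.
have : \forall n \near \oo, U (w n).
  by apply: cw; apply: open_nbhs_nbhs; split.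
move=> HU; near \oo => n.
have [_] := hw n; apply; near: n; exact: HU.
Unshelve. all: by end_near.
Qed.

Definition cyl3 (p : nat * seq bool * seq nat) : set Zt :=
  [set z' | forall i, (i < p.1.1)%N -> z'.1 i = nth false p.1.2 i /\ z'.2 i = nth 0%N p.2 i].

Definition bas (k : nat) : set Zt :=
  match (unpickle k : option (nat * seq bool * seq nat)) with
  | Some p => cyl3 p | None => set0 end.

Lemma open_union (U : set Zt) : open U ->
  U = \bigcup_(k in [set k | bas k `<=` U]) bas k.
Proof.
move=> oU; apply/seteqP; split; last by move=> z [k /= + Hk]; apply.
move=> z Uz; have [m Hm] := @cyl_open U z oU Uz.
pose p : nat * seq bool * seq nat := (m, mkseq z.1 m, mkseq z.2 m).
have bp : bas (pickle p) = cylz m z.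
  rewrite /bas pickleK /cyl3 /cylz /=; apply/seteqP; split => z' /= H i im;
    by have := H i im; rewrite ?nth_mkseq.
exists (pickle p); rewrite /= bp //.
Qed.

Definition dec (c : nat -> bool) (i n : nat) : bool := c (pickle (i, n)).
Definition Cl (c : nat -> bool) : set Zt :=
  ~` \bigcup_(k in [set k | dec c 0 k]) bas k.
Definition Gd (c : nat -> bool) : set Zt :=
  \bigcap_i \bigcup_(k in [set k | dec c i.+1 k]) bas k.
Definition Aset (c : nat -> bool) : set Y := fst @` (Cl c `&` Gd c).

Lemma code_surj (T : set Y) : cech_analytic T -> exists c, T = Aset c.
Proof.
move=> [C [S [cC [[F oF ->] ->]]]].
pose c (k : nat) : bool := match (unpickle k : option (nat * nat)) with
  | Some (0, n) => `[< bas n `<=` ~` C >]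
  | Some (i.+1, n) => `[< bas n `<=` F i >]
  | None => false end.
exists c; rewrite /Aset; congr (fst @` (_ `&` _)).
- rewrite /Cl /dec /c -[C in LHS]setCK; f_equal.
  rewrite [LHS](@open_union _ (closed_openC cC)).
  by apply: eq_bigcupl; split => k /=; rewrite pickleK; [move=> ?; exact/asboolP|move/asboolP].
- rewrite /Gd /dec /c; apply: eq_bigcapr => i _.
  rewrite [LHS](@open_union _ (oF i)).
  by apply: eq_bigcupl; split => k /=; rewrite pickleK; [move=> ?; exact/asboolP|move/asboolP].
Qed.

Definition phi (y : Y) : G := fun k : K => match k.2 with 0%N => false | n.+1 => y n end.

Lemma phi_cont : continuous phi.
Proof.
move=> y.
apply: (proj2 (@pointwise_cvgP K bool _ (phi y) _)) => t.
apply: cvg_near_cst.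
suff : \forall g \near y, phi g t = phi y t by [].
rewrite /phi; case: t => w [|n] /=.
  by apply: filterE.
exact: (near_coord y n).
Qed.

Definition psi (z : Zt) : (G * NN)%type := (phi z.1, z.2).

Lemma psi_cont : continuous psi.
Proof.
move=> [y s].
apply: (@cvg_pair _ _ _ _ (nbhs (phi y)) (nbhs s) _ _ _ (fun z : Zt => phi z.1) (fun z : Zt => z.2)).
- apply: (@continuous_comp _ _ _ fst phi (y, s)); last exact: phi_cont.
  by apply: cvg_fst.
- by apply: cvg_snd.
Qed.

Lemma pre_cech (T : set G) : cech_analytic T -> cech_analytic (phi @^-1` T).
Proof.
move=> [C [S [cC [[F oF eS] ->]]]].
exists (psi @^-1` C), (psi @^-1` S); split; [|split].
- by apply: closed_comp => // x _; exact: psi_cont.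
- exists (fun i => psi @^-1` F i).
    by move=> i; apply: open_comp (oF i) => x _; exact: psi_cont.
  by rewrite eS preimage_bigcap.
- apply/seteqP; split => y.
  + move=> [z [Cz Sz] e]; exists (y, z.2) => //.
    by rewrite /= /psi /= -e -surjective_pairing.
  + move=> [z [Cz Sz] <-] /=; exists (psi z) => //.
Qed.

Definition Kf (f : Y -> nat -> bool) : set G :=
  [set x : G | (forall r s, x (r, 0%N) -> x (s, 0%N) -> r = s) /\
           (forall r n w, x (r, 0%N) -> (x (w, n.+1) : bool) = f r n)].

Definition Vs (S : set Y) : set G := [set x | exists2 r, S r & x (r, 0%N)].

Lemma Kf_closed f : closed (Kf f).
Proof.
move=> x /= xcl; split.
- move=> r s xr xs.
  have := xcl [set g | g (r, 0%N) = x (r, 0%N) /\ g (s, 0%N) = x (s, 0%N)].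
  case.
    by apply: filterI; [exact: (near_coord x (r, 0%N))|exact: (near_coord x (s, 0%N))].
  move=> g [[Kg _] [gr gs]]; apply: Kg; by [rewrite gr|rewrite gs].
- move=> r n w xr.
  have := xcl [set g | g (r, 0%N) = x (r, 0%N) /\ g (w, n.+1) = x (w, n.+1)].
  case.
    by apply: filterI; [exact: (near_coord x (r, 0%N))|exact: (near_coord x (w, n.+1))].
  move=> g [[_ Kg] [gr gw]]; rewrite -gw; apply: Kg; by rewrite gr.
Qed.

Lemma Vs_open S : open (Vs S).
Proof.
rewrite openE => x [r Sr xr].
apply: filterS (near_coord x (r, 0%N)) => g /= e; exists r => //; by rewrite e.
Qed.

Lemma closed_open_cech (X : topologicalType) (C U : set X) :
  closed C -> open U -> cech_analytic (C `&` U).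
Proof.
move=> cC oU.
have fc : continuous (@fst X NN) by move=> x; apply: cvg_fst.
exists [set z | C z.1], [set z | U z.1]; split; [|split].
- by apply: closed_comp => // x _; exact: fc.
- by apply: open_Gdelta; apply: open_comp => // x _; exact: fc.
- apply/seteqP; split => x.
  + by move=> ?; exists (x, fun _ => 0%N).
  + by move=> [z ? <-].
Qed.


Definition AS (S : set Y) : set G := Kf (fun r => r) `&` Vs S.
Definition BB : set G := Kf (fun _ _ => false) `&` Vs setT.

Lemma addbF' (x : bool) : x + false = x. Proof. by case: x. Qed.
Lemma addbb' (x : bool) : x + x = false. Proof. by case: x. Qed.

Lemma sum_pre S : phi @^-1` (sumset (AS S) BB) = S.
Proof.
apply/seteqP; split => y.
- move=> [a [[_ Ka] [r Sr ar]] [b [[_ Kb] [s _ bs]] e]].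
  suff -> : y = r by [].
  apply: funext => n.
  have := congr1 (fun f : G => f (r, n.+1)) e.
  have -> : (a + b) (r, n.+1) = a (r, n.+1) + b (r, n.+1) by [].
  have h1 : a (r, n.+1) = r n := Ka r n r ar.
  have h2 : b (r, n.+1) = false := Kb s n r bs.
  by rewrite h1 h2 addbF' /phi /= => <-.
- move=> Sy.
  pose a : G := fun k : K => match k.2 with 0%N => k.1 == y | n.+1 => y n end.
  pose b : G := fun k : K => match k.2 with 0%N => k.1 == y | n.+1 => false end.
  exists a.
    split; last by exists y => //; rewrite /a /= eqxx.
    split; first by move=> r1 r2; rewrite /a /= => /eqP -> /eqP ->.
    by move=> r n w; rewrite /a /= => /eqP ->.
  exists b.
    split; last by exists y => //; rewrite /b /= eqxx.
    split; first by move=> r1 r2; rewrite /b /= => /eqP -> /eqP ->.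
    by move=> r n w; rewrite /b /=.
  apply: funext => -[w [|n]].
  + have -> : (a + b) (w, 0%N) = a (w, 0%N) + b (w, 0%N) by [].
    by rewrite /a /b /phi /= addbb'.
  + have -> : (a + b) (w, n.+1) = a (w, n.+1) + b (w, n.+1) by [].
    by rewrite /a /b /phi /= addbF'.
Qed.

Lemma G_compact : compact [set: G].
Proof.
have := @tychonoff K (fun _ => bool) (fun _ => setT) (fun _ => bool_compact).
by rewrite (_ : [set f | forall i, setT (f i)] = setT) //; apply/seteqP; split.
Qed.

Lemma G_hausdorff : hausdorff_space G.
Proof. exact: (@hausdorff_product K (fun _ => bool) (fun _ => discrete_hausdorff)). Qed.

Local Close Scope ring_scope.

Theorem proposition5p7 :
  exists G : topologicalZmodType,
    compact [set: G] /\ hausdorff_space G /\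
    exists A B : set G,
      cech_analytic A /\ cech_analytic B /\ ~ cech_analytic (sumset A B).
Proof.
exists G; split; first exact: G_compact.
split; first exact: G_hausdorff.
pose D : set Y := [set r | ~ Aset r r].
exists (AS D), BB; split; first exact: closed_open_cech (Kf_closed _) (Vs_open _).
split; first exact: closed_open_cech (Kf_closed _) (Vs_open _).
move=> /pre_cech; rewrite sum_pre => /code_surj [c ec].
have := congr1 (fun P : set Y => P c) ec => /= e.
have [Dc|nDc] := pselect (D c).
- have Dc' : ~ Aset c c := Dc.
  by apply: Dc'; rewrite -e.
- apply: nDc => h.
  have hD : D c by rewrite e.
  exact: hD h.
Qed.
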